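(* Let $K\in\{\mathbb R,\mathbb C,\mathbb H\}$ and let $(E,d)$ be a metric vector space over $K$ such that $d$ is $C_0$-translation invariant and $(C_1,C_2,C_3)$-lipschitz multiplicative. Let $d_0(x,y)=\int_{\mathbb U}d(ux,uy)\,d\mu(u)$, $\delta(x,y)=\lim_{n\to\infty}\frac1n d(nx,ny)$, $\delta_0(x,y)=\lim_{n\to\infty}\frac1n d_0(nx,ny)$. Let (i) $E_0=\{x\in E:\ \delta(ux,0)=0\text{ for all }u\in\mathbb U\}$; (ii) $E_1=\{x\in E:\delta_0(x,0)=0\}$; (iii) $E_2$ the maximal linear subspace of $E$ on which $d_0$ is bounded; (iv) $E_3$ the maximal linear subspace of $E$ on which $d$ is bounded. Then $E_0=E_1=E_2=E_3$.
   Context: A metric vector space is a topological vector space over $K$ whose topology is generated by the metric $d$. $\mathbb U=\{u\in K:|u|=1\}$, $\mu$ the right-invariant Haar probability measure on $\mathbb U$. $d$ is $C_0$-translation invariant if $d(x+z,y+z)\le d(x,y)+C_0$ for all $x,y,z$. $(C_1,C_2,C_3)$-lipschitz multiplicative ($C_1\ge1$, $C_2,C_3\ge0$) means $C_1^{-1}|\lambda|d(x,y)-C_2|\lambda|-C_3\le d(\lambda x,\lambda y)\le C_1|\lambda|d(x,y)+C_2|\lambda|+C_3$ for all $\lambda\in K$, $x,y\in E$. A distance $\rho$ is bounded on a set $A$ if $\sup_{x,y\in A}\rho(x,y)<\infty$. (Under these hypotheses the limits defining $\delta,\delta_0$ exist.) *)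

(* Defs.v *)
From HB Require Import structures.
From mathcomp Require Import all_boot all_order all_algebra.
From mathcomp Require Import all_classical all_reals all_analysis.
Set Implicit Arguments. Unset Strict Implicit. Unset Printing Implicit Defensive.
Import Order.TTheory GRing.Theory Num.Theory numFieldNormedType.Exports.
Local Open Scope classical_set_scope.
Local Open Scope ring_scope.

(* ---------- Quaternions, realised as R^4 = ((R*R)*R)*R, which carries the
   (Borel = product) sigma-algebra of mathcomp-analysis. *)
Section Quat.
Variable R : realType.
Definition quat := (((R * R) * R) * R)%type.
Definition qa (q : quat) : R := q.1.1.1.
Definition qb (q : quat) : R := q.1.1.2.
Definition qc (q : quat) : R := q.1.2.
Definition qd (q : quat) : R := q.2.
Definition mkq (a b c d : R) : quat := (a, b, c, d).
Definition qreal (r : R) : quat := mkq r 0 0 0.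
Definition qone : quat := qreal 1.
Definition qadd (p q : quat) : quat :=
  mkq (qa p + qa q) (qb p + qb q) (qc p + qc q) (qd p + qd q).
Definition qsub (p q : quat) : quat :=
  mkq (qa p - qa q) (qb p - qb q) (qc p - qc q) (qd p - qd q).
Definition qmul (p q : quat) : quat :=
  mkq (qa p * qa q - qb p * qb q - qc p * qc q - qd p * qd q)
      (qa p * qb q + qb p * qa q + qc p * qd q - qd p * qc q)
      (qa p * qc q - qb p * qd q + qc p * qa q + qd p * qb q)
      (qa p * qd q + qb p * qc q - qc p * qb q + qd p * qa q).
Definition qnorm (q : quat) : R :=
  Num.sqrt (qa q ^+ 2 + qb q ^+ 2 + qc q ^+ 2 + qd q ^+ 2).
End Quat.

Inductive Kkind := KR | KC | KH.

Definition Kset (R : realType) (k : Kkind) : set (quat R) :=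
  match k with
  | KR => [set q | qb q = 0 /\ qc q = 0 /\ qd q = 0]
  | KC => [set q | qc q = 0 /\ qd q = 0]
  | KH => [set: quat R]
  end.

Definition Uset (R : realType) (k : Kkind) : set (quat R) :=
  [set u | Kset k u /\ qnorm u = 1].

Section Space.
Variables (R : realType) (k : Kkind) (E : zmodType).
Variable smul : quat R -> E -> E.
Variable d : E -> E -> R.

Definition K_vector_space : Prop :=
  (forall l x y, Kset k l -> smul l (x + y) = smul l x + smul l y) /\
  (forall l m x, Kset k l -> Kset k m -> smul (qadd l m) x = smul l x + smul m x) /\
  (forall l m x, Kset k l -> Kset k m -> smul (qmul l m) x = smul l (smul m x)) /\
  (forall x, smul (qone R) x = x).

Definition is_metric : Prop :=
  (forall x y, d x y = 0 <-> x = y) /\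
  (forall x y, d x y = d y x) /\
  (forall x y z, d x z <= d x y + d y z).

Definition is_tvs : Prop :=
  (forall x y e, 0 < e -> exists2 r, 0 < r &
     forall x' y', d x x' < r -> d y y' < r -> d (x + y) (x' + y') < e) /\
  (forall l x e, Kset k l -> 0 < e -> exists2 r, 0 < r &
     forall l' x', Kset k l' -> qnorm (qsub l l') < r -> d x x' < r ->
       d (smul l x) (smul l' x') < e).

Definition translation_invariant (C0 : R) : Prop :=
  forall x y z, d (x + z) (y + z) <= d x y + C0.

Definition lipschitz_multiplicative (C1 C2 C3 : R) : Prop :=
  [/\ 1 <= C1, 0 <= C2, 0 <= C3 &
  forall l x y, Kset k l ->
    C1^-1 * qnorm l * d x y - C2 * qnorm l - C3 <= d (smul l x) (smul l y) /\
    d (smul l x) (smul l y) <= C1 * qnorm l * d x y + C2 * qnorm l + C3].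

Definition K_subspace (F : set E) : Prop :=
  F 0 /\ (forall x y, F x -> F y -> F (x + y)) /\
  (forall l x, Kset k l -> F x -> F (smul l x)).

Definition bounded_on (rho : E -> E -> R) (A : set E) : Prop :=
  exists M : R, forall x y, A x -> A y -> rho x y <= M.

(* F is THE maximal (i.e. greatest) linear subspace on which rho is bounded *)
Definition maximal_bounded_subspace (rho : E -> E -> R) (F : set E) : Prop :=
  [/\ K_subspace F, bounded_on rho F &
      forall G, K_subspace G -> bounded_on rho G -> G `<=` F].
End Space.

Definition right_invariant_haar (R : realType) (k : Kkind)
    (mu : probability (quat R) R) : Prop :=
  mu (Uset k) = 1%E /\
  forall v, Uset k v -> forall A : set (quat R), measurable A ->
    mu ((fun u => qmul u v) @^-1` A) = mu A.

Definition d0_of (R : realType) (k : Kkind) (E : zmodType)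
    (smul : quat R -> E -> E) (d : E -> E -> R) (mu : probability (quat R) R)
    (x y : E) : R :=
  fine (\int[mu]_(u in Uset k) (d (smul u x) (smul u y))%:E)%E.

Definition asymp_of (R : realType) (E : zmodType) (smul : quat R -> E -> E)
    (rho : E -> E -> R) (x y : E) : R :=
  limn (fun n : nat => rho (smul (qreal n%:R) x) (smul (qreal n%:R) y) / n%:R).

(* Main.v *)
Require Import Defs.
From HB Require Import structures.
From mathcomp Require Import all_boot all_order all_algebra.
From mathcomp Require Import all_classical all_reals all_analysis.
From mathcomp Require Import ring lra measurable_realfun.
Import Order.TTheory GRing.Theory Num.Theory numFieldNormedType.Exports.
Local Open Scope classical_set_scope.
Local Open Scope ring_scope.
Set Implicit Arguments. Unset Strict Implicit. Unset Printing Implicit Defensive.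

Lemma qaddRR (R : realType) (a b : R) : qadd (qreal a) (qreal b) = qreal (a + b).
Proof. by rewrite /qadd /qreal /mkq /qa /qb /qc /qd /= addr0. Qed.

Lemma qmulRR (R : realType) (a b : R) : qmul (qreal a) (qreal b) = qreal (a * b).
Proof. rewrite /qmul /qreal /mkq /qa /qb /qc /qd /=; congr (_, _, _, _); ring. Qed.

Lemma qmulRC (R : realType) (a : R) u : qmul (qreal a) u = qmul u (qreal a).
Proof.
case: u => [[[x y] z] w].
rewrite /qmul /qreal /mkq /qa /qb /qc /qd /=; congr (_, _, _, _); ring.
Qed.

Lemma qnormR (R : realType) (a : R) : qnorm (qreal a) = `|a|.
Proof.
by rewrite /qnorm /qreal /mkq /qa /qb /qc /qd /= expr0n /= !addr0 sqrtr_sqr.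
Qed.

Lemma KsetR (R : realType) k (a : R) : Kset k (qreal a).
Proof. by case: k => //=. Qed.

Lemma KsetM (R : realType) k (l m : quat R) : Kset k l -> Kset k m -> Kset k (qmul l m).
Proof.
case: l => [[[a b] c] e]; case: m => [[[a' b'] c'] e'].
case: k => /=; rewrite /qmul /mkq /qa /qb /qc /qd /=.
- by move=> [-> [-> ->]] [-> [-> ->]]; split; [|split]; ring.
- by move=> [-> ->] [-> ->]; split; ring.
- by [].
Qed.

Lemma Uset1 (R : realType) k : Uset k (qone R).
Proof. split; first exact: KsetR. by rewrite /qone qnormR normr1. Qed.

Lemma UsetK (R : realType) k (u : quat R) : Uset k u -> Kset k u.
Proof. by case. Qed.
Lemma subadd_iter (R : realType) (b : nat -> R) m :
  (forall n m, b (n+m)%N <= b n + b m) ->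
  forall q r, b (q * m + r)%N <= q%:R * b m + b r.
Proof.
move=> sb; elim=> [|q IH] r; first by rewrite mul0n add0n mul0r add0r.
rewrite mulSn -addnA (le_trans (sb _ _)) // mulrSr.
have := IH r; lra.
Qed.

Lemma fekete (R : realType) (a : nat -> R) (c : R) :
  (forall n, 0 <= a n) -> 0 <= c -> (forall n m, a (n+m)%N <= a n + a m + c) ->
  cvgn (fun n => a n / n%:R).
Proof.
move=> a0 c0 sa.
pose b n := a n + c.
have b0 n : 0 <= b n by rewrite /b; have := a0 n; lra.
have sb n m : b (n+m)%N <= b n + b m by rewrite /b; have := sa n m; lra.
pose S := [set b n / n%:R | n in [set n | (0 < n)%N]].
have hS : has_inf S.
  split; first by exists (b 1%N / 1%:R), 1%N.
  by exists 0 => _ [n _ <-]; rewrite divr_ge0.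
set L := inf S.
apply/cvg_ex; exists L; apply/cvgrPdist_le => e e0.
have e20 : 0 < e / 2 by rewrite divr_gt0.
have [_ [m /= m0 <-] hm] := inf_adherent e20 hS.
pose K := \sum_(r < m) b r.
have bK r : (r < m)%N -> b r <= K.
  move=> rm; rewrite /K (bigD1 (Ordinal rm)) //= lerDl sumr_ge0 //.
have bn n : b n <= (n %/ m)%:R * b m + K.
  rewrite {1}(divn_eq n m) (le_trans (@subadd_iter _ b m sb _ _)) // lerD2l bK //.
  by rewrite ltn_mod.
have K0 : 0 <= K by rewrite sumr_ge0.
near=> n.
have n0 : (0 < n)%N by near: n; exact: nbhs_infty_gt.
have nR : 0 < n%:R :> R by rewrite ltr0n.
have lb : L <= b n / n%:R by apply: (ge_inf _) => //; [case: hS | exists n].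
have ub : b n / n%:R <= L + e.
  have hK : K / n%:R <= e / 2.
    rewrite ler_pdivrMr // mulrC -ler_pdivrMr //.
    near: n; exact: nbhs_infty_ger.
  have hq : (n %/ m)%:R * b m / n%:R <= b m / m%:R.
    have qm : (n %/ m)%:R * m%:R <= n%:R :> R by rewrite -natrM ler_nat leq_divM.
    have mR : 0 < m%:R :> R by rewrite ltr0n.
    have t0 : 0 <= b m / m%:R by rewrite divr_ge0.
    have eb : b m = b m / m%:R * m%:R by rewrite divfK // gt_eqF.
    set t := b m / m%:R in t0 eb *; rewrite {1}eb ler_pdivrMr //; nra.
  apply: (@le_trans _ _ ((n %/ m)%:R * b m / n%:R + K / n%:R)).
    by rewrite -mulrDl ler_wpM2r // invr_ge0 ltW.
  rewrite /L; lra.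
have hc : c / n%:R <= e.
  rewrite ler_pdivrMr // mulrC -ler_pdivrMr //.
  near: n; exact: nbhs_infty_ger.
have hc0 : 0 <= c / n%:R by rewrite divr_ge0.
have eq : b n / n%:R = a n / n%:R + c / n%:R by rewrite /b mulrDl.
rewrite ler_norml; apply/andP; split; lra.
Unshelve. all: by end_near.
Qed.
Lemma inv_cvg0 (R : realType) : (fun n : nat => (n%:R : R)^-1) @ \oo --> 0.
Proof.
apply/cvgrPdist_le => e e0; near=> n.
have n0 : (0 < n)%N by near: n; exact: nbhs_infty_gt.
rewrite distrC subr0 ger0_norm ?invr_ge0 // -[e]invrK lef_pV2 ?posrE ?invr_gt0 ?ltr0n //.
near: n; exact: nbhs_infty_ger.
Unshelve. all: by end_near. Qed.

Lemma smul0 (R : realType) k (E : zmodType) (smul : quat R -> E -> E) l :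
  K_vector_space k smul -> Kset k l -> smul l 0 = 0.
Proof.
move=> [hA _] Kl; have h := hA l 0 0 Kl; rewrite addr0 in h.
by apply: (@addrI _ (smul l 0)); rewrite addr0 -h.
Qed.

Lemma smulR0 (R : realType) k (E : zmodType) (smul : quat R -> E -> E) x :
  K_vector_space k smul -> smul (qreal 0) x = 0.
Proof.
move=> [_ [hD _]]; have h := hD _ _ x (KsetR k 0) (KsetR k 0).
rewrite qaddRR addr0 in h.
by apply: (@addrI _ (smul (qreal 0) x)); rewrite addr0 -h.
Qed.

Lemma smulnD (R : realType) k (E : zmodType) (smul : quat R -> E -> E) (n m : nat) x :
  K_vector_space k smul ->
  smul (qreal (n + m)%N%:R) x = smul (qreal n%:R) x + smul (qreal m%:R) x.
Proof. by move=> [_ [hD _]]; rewrite natrD -qaddRR (hD _ _ _ (KsetR k _) (KsetR k _)). Qed.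

Lemma smulRC (R : realType) k (E : zmodType) (smul : quat R -> E -> E) (a : R) l x :
  K_vector_space k smul -> Kset k l ->
  smul (qreal a) (smul l x) = smul l (smul (qreal a) x).
Proof.
by move=> [_ [_ [hM _]]] Kl; rewrite -(hM _ _ _ (KsetR k a) Kl) qmulRC (hM _ _ _ Kl (KsetR k a)).
Qed.

Lemma smulRR (R : realType) k (E : zmodType) (smul : quat R -> E -> E) (a b : R) x :
  K_vector_space k smul ->
  smul (qreal a) (smul (qreal b) x) = smul (qreal (a * b)) x.
Proof. by move=> [_ [_ [hM _]]]; rewrite -(hM _ _ _ (KsetR k a) (KsetR k b)) qmulRR. Qed.

Lemma smul1 (R : realType) k (E : zmodType) (smul : quat R -> E -> E) x :
  K_vector_space k smul -> smul (qreal 1) x = x.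
Proof. by move=> [_ [_ [_ h1]]]; exact: h1. Qed.

Lemma dxx (R : realType) (E : zmodType) (d : E -> E -> R) x :
  is_metric d -> d x x = 0.
Proof. by move=> [h _]; apply/h. Qed.

Lemma d_ge0 (R : realType) (E : zmodType) (d : E -> E -> R) x y :
  is_metric d -> 0 <= d x y.
Proof.
move=> hm; have [_ [hs ht]] := hm; have := ht x y x; rewrite dxx // (hs y x).
lra.
Qed.

Lemma C0_ge0 (R : realType) (E : zmodType) (d : E -> E -> R) C0 :
  is_metric d -> translation_invariant d C0 -> 0 <= C0.
Proof. by move=> hm /(_ 0 0 0); rewrite addr0 dxx // add0r. Qed.

Lemma lipU (R : realType) k (E : zmodType) (smul : quat R -> E -> E) d C1 C2 C3 l x :
  K_vector_space k smul -> lipschitz_multiplicative k smul d C1 C2 C3 -> Kset k l ->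
  d (smul l x) 0 <= C1 * qnorm l * d x 0 + C2 * qnorm l + C3.
Proof.
move=> hV [_ _ _ hL] Kl; have := (hL l x 0 Kl).2; by rewrite (smul0 hV Kl).
Qed.

Lemma lipL (R : realType) k (E : zmodType) (smul : quat R -> E -> E) d C1 C2 C3 l x :
  K_vector_space k smul -> lipschitz_multiplicative k smul d C1 C2 C3 -> Kset k l ->
  C1^-1 * qnorm l * d x 0 - C2 * qnorm l - C3 <= d (smul l x) 0.
Proof.
move=> hV [_ _ _ hL] Kl; have := (hL l x 0 Kl).1; by rewrite (smul0 hV Kl).
Qed.

Lemma qnorm_ge0 (R : realType) (q : quat R) : 0 <= qnorm q.
Proof. exact: sqrtr_ge0. Qed.

Definition aseq (R : realType) (E : zmodType) (smul : quat R -> E -> E) (d : E -> E -> R)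
  x (n : nat) := d (smul (qreal n%:R) x) 0.

Lemma asympE (R : realType) k (E : zmodType) (smul : quat R -> E -> E) d x :
  K_vector_space k smul ->
  asymp_of smul d x 0 = limn (fun n => aseq smul d x n / n%:R).
Proof.
move=> hV; rewrite /asymp_of.
suff -> : (fun n : nat => d (smul (qreal n%:R) x) (smul (qreal n%:R) 0) / n%:R) =
  (fun n => aseq smul d x n / n%:R) by [].
by apply/funext => n; rewrite /aseq (smul0 hV (KsetR k _)).
Qed.

Lemma aseq_sub (R : realType) k (E : zmodType) (smul : quat R -> E -> E) d C0 x n m :
  K_vector_space k smul -> is_metric d -> translation_invariant d C0 ->
  aseq smul d x (n + m) <= aseq smul d x n + aseq smul d x m + C0.
Proof.
move=> hV hm hT; rewrite /aseq (smulnD _ _ _ hV).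
set p := smul _ x; set q := smul _ x.
have [_ [_ ht]] := hm.
have h1 := ht (p + q) (0 + q) 0; rewrite add0r in h1.
have h2 := hT p 0 q; rewrite add0r in h2.
lra.
Qed.

Lemma aseq_cvg (R : realType) k (E : zmodType) (smul : quat R -> E -> E) d C0 x :
  K_vector_space k smul -> is_metric d -> translation_invariant d C0 ->
  cvgn (fun n => aseq smul d x n / n%:R).
Proof.
move=> hV hm hT; apply: (@fekete _ _ C0).
- by move=> n; exact: d_ge0.
- exact: C0_ge0 hm hT.
- by move=> n m; exact: aseq_sub hV hm hT.
Qed.

Lemma bound_of_cvg0 (R : realType) k (E : zmodType) (smul : quat R -> E -> E) d
    C1 C2 C3 x l :
  K_vector_space k smul -> is_metric d -> lipschitz_multiplicative k smul d C1 C2 C3 ->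
  (fun n => aseq smul d x n / n%:R) @ \oo --> 0 -> Kset k l ->
  d (smul l x) 0 <= C3.
Proof.
move=> hV hm hL hc Kl.
have [C11 C20 C30 _] := hL.
set q := qnorm l.
have q0 : 0 <= q by exact: qnorm_ge0.
set y := smul l x.
pose h n := C1 * C1 * q * (aseq smul d x n / n%:R) + (C1 * (C2 * q + C3) + C2) * n%:R^-1.
have hcv : h @ \oo --> 0.
  have := cvgD (cvgM (cvg_cst (C1 * C1 * q)) hc)
    (cvgM (cvg_cst (C1 * (C2 * q + C3) + C2)) (@inv_cvg0 R)).
  rewrite !mulr0 addr0 => H; apply: H.
suff : d y 0 - C3 <= 0 by lra.
rewrite -(cvg_lim _ hcv) //; apply: limr_ge; first by apply/cvg_ex; exists 0.
near=> n.
have n0 : (0 < n)%N by near: n; exact: nbhs_infty_gt.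
have nR : 0 < n%:R :> R by rewrite ltr0n.
have ey : y = smul (qreal n%:R^-1) (smul (qreal n%:R) y).
  by rewrite (smulRR _ _ _ hV) mulVf ?gt_eqF // (smul1 _ hV).
have h1 := lipU (smul (qreal n%:R) y) hV hL (KsetR k n%:R^-1).
rewrite -ey qnormR ger0_norm in h1; last by rewrite invr_ge0 ltW.
have h2 := lipU (smul (qreal n%:R) x) hV hL Kl.
rewrite -/q -(smulRC _ _ hV Kl) -/y in h2.
have t0 : 0 <= n%:R^-1 :> R by rewrite invr_ge0 ltW.
have h3 := ler_wpM2l (mulr_ge0 (le_trans ler01 C11) t0) h2.
rewrite /h /aseq; set a := d (smul (qreal n%:R) x) 0 in h2 h3 *.
set D := d (smul (qreal n%:R) y) 0 in h1 h2 h3.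
set t := n%:R^-1 in t0 h1 h3 *.
nra.
Unshelve. all: by end_near.
Qed.

Lemma cvg0_of_bounded (R : realType) (a : nat -> R) M :
  (forall n, 0 <= a n <= M) -> (fun n => a n / n%:R) @ \oo --> 0.
Proof.
move=> ha; apply: (@squeeze_cvgr _ _ _ _ (fun=> 0) (fun n => M * n%:R^-1)).
- near=> n; have n0 : (0 < n)%N by near: n; exact: nbhs_infty_gt.
  have t0 : 0 <= n%:R^-1 :> R by rewrite invr_ge0 ler0n.
  have [h0 h1] := andP (ha n).
  by rewrite divr_ge0 //= ?ler0n // ler_wpM2r.
- exact: cvg_cst.
- have := cvgM (cvg_cst M) (@inv_cvg0 R); rewrite mulr0 => H; apply: H.
Unshelve. all: by end_near.
Qed.

Definition E0set (R : realType) k (E : zmodType) (smul : quat R -> E -> E) d :=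
  [set x | forall u, Uset k u -> asymp_of smul d (smul u x) 0 = 0].

Lemma E0_bound (R : realType) k (E : zmodType) (smul : quat R -> E -> E) d C0 C1 C2 C3 x l :
  K_vector_space k smul -> is_metric d -> translation_invariant d C0 ->
  lipschitz_multiplicative k smul d C1 C2 C3 ->
  E0set k smul d x -> Kset k l -> d (smul l x) 0 <= C3.
Proof.
move=> hV hm hT hL hx Kl; apply: (bound_of_cvg0 hV hm hL) => //.
have := hx _ (Uset1 R k); rewrite (smul1 _ hV) (asympE _ _ hV) => h0.
by rewrite -h0; exact: (aseq_cvg hV hm hT).
Qed.

Lemma E0P (R : realType) k (E : zmodType) (smul : quat R -> E -> E) d C0 C1 C2 C3 x :
  K_vector_space k smul -> is_metric d -> translation_invariant d C0 ->
  lipschitz_multiplicative k smul d C1 C2 C3 ->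
  (E0set k smul d x <-> exists M, forall l, Kset k l -> d (smul l x) 0 <= M).
Proof.
move=> hV hm hT hL; split.
- move=> hx; exists C3 => l Kl; apply: (bound_of_cvg0 hV hm hL) => //.
  have := hx _ (Uset1 R k); rewrite (smul1 _ hV) (asympE _ _ hV) => h0.
  by rewrite -h0; exact: (aseq_cvg hV hm hT).
- move=> [M hM] u Uu; rewrite (asympE _ _ hV); apply: cvg_lim => //.
  apply: (@cvg0_of_bounded _ _ M) => n; rewrite d_ge0 //= /aseq.
  have [_ [_ [hMul _]]] := hV.
  rewrite -(hMul _ _ _ (KsetR k _) (UsetK Uu)).
  by apply: hM; apply: KsetM; [exact: KsetR|exact: UsetK].
Qed.

Lemma E0_maximal (R : realType) k (E : zmodType) (smul : quat R -> E -> E) d C0 C1 C2 C3 :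
  K_vector_space k smul -> is_metric d -> translation_invariant d C0 ->
  lipschitz_multiplicative k smul d C1 C2 C3 ->
  maximal_bounded_subspace k smul d (E0set k smul d).
Proof.
move=> hV hm hT hL.
have P x := E0P x hV hm hT hL.
have [hA [_ [hMul _]]] := hV.
have [_ [hs ht]] := hm.
split.
- split; [|split].
  + apply/P; exists 0 => l Kl; rewrite (smul0 hV Kl) dxx //.
  + move=> x y /P [M1 h1] /P [M2 h2]; apply/P; exists (M1 + M2 + C0) => l Kl.
    rewrite hA //.
    have e1 := ht (smul l x + smul l y) (0 + smul l y) 0; rewrite add0r in e1.
    have e2 := hT (smul l x) 0 (smul l y); rewrite add0r in e2.
    have := h1 l Kl; have := h2 l Kl; lra.
  + move=> m x Km /P [M h]; apply/P; exists M => l Kl.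
    by rewrite -hMul //; apply: h; exact: KsetM.
- exists (C3 + C3) => x y hx hy.
  have bx := E0_bound hV hm hT hL hx (KsetR k 1).
  have by_ := E0_bound hV hm hT hL hy (KsetR k 1).
  rewrite !(smul1 _ hV) in bx by_.
  have := ht x 0 y; rewrite (hs 0 y); lra.
- move=> G [G0 [GD GZ]] [M hM] x Gx; apply/P; exists M => l Kl.
  by apply: hM => //; exact: GZ.
Qed.

Lemma fU_bounds (R : realType) k (E : zmodType) (smul : quat R -> E -> E) d C1 C2 C3 a b u :
  lipschitz_multiplicative k smul d C1 C2 C3 -> Uset k u ->
  C1^-1 * d a b - C2 - C3 <= d (smul u a) (smul u b) <= C1 * d a b + C2 + C3.
Proof.
move=> [_ _ _ hL] [Ku nu]; have [h1 h2] := hL u a b Ku.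
by rewrite nu !mulr1 in h1 h2; rewrite h1 h2.
Qed.

Lemma fU_integrable (R : realType) k (E : zmodType) (smul : quat R -> E -> E) d C1 C2 C3
    (mu : probability (quat R) R) a b :
  is_metric d -> lipschitz_multiplicative k smul d C1 C2 C3 -> right_invariant_haar k mu ->
  measurable (@Uset R k) ->
  measurable_fun (Uset k) (fun u => d (smul u a) (smul u b)) ->
  mu.-integrable (Uset k) (EFin \o (fun u => d (smul u a) (smul u b))).
Proof.
move=> hm hL [mU _] hU hf; apply: measurable_bounded_integrable => //.
  by apply: (le_lt_trans (probability_le1 mu hU)); rewrite ltry.
exists (C1 * d a b + C2 + C3); split; first by rewrite num_real.
move=> N hN u Uu /=; rewrite ger0_norm ?d_ge0 //.
have /andP[_ h] := fU_bounds a b hL Uu; apply: (le_trans h); exact: ltW.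
Qed.

Lemma d0_le (R : realType) k (E : zmodType) (smul : quat R -> E -> E) d C1 C2 C3
    (mu : probability (quat R) R) a b :
  is_metric d -> lipschitz_multiplicative k smul d C1 C2 C3 -> right_invariant_haar k mu ->
  measurable (@Uset R k) ->
  measurable_fun (Uset k) (fun u => d (smul u a) (smul u b)) ->
  C1^-1 * d a b - C2 - C3 <= d0_of k smul d mu a b <= C1 * d a b + C2 + C3.
Proof.
move=> hm hL hmu hU hf.
have [mU _] := hmu.
have fmU : fine (mu (Uset k)) = 1 by rewrite mU.
have hi := fU_integrable hm hL hmu hU hf.
change (C1^-1 * d a b - C2 - C3 <= Rintegral mu (Uset k) (fun u => d (smul u a) (smul u b))
   <= C1 * d a b + C2 + C3).
apply/andP; split.
- rewrite -[X in X <= _]mulr1 -fmU -Rintegral_cst //.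
  apply: le_Rintegral => //; first exact: finite_measure_integrable_cst.
  by move=> u Uu; have /andP[] := fU_bounds a b hL Uu.
- rewrite -[X in _ <= X]mulr1 -fmU -Rintegral_cst //.
  apply: le_Rintegral => //; first exact: finite_measure_integrable_cst.
  by move=> u Uu; have /andP[] := fU_bounds a b hL Uu.
Qed.

Lemma bint (R : realType) k (mu : probability (quat R) R) (g : quat R -> R) B :
  measurable (@Uset R k) -> measurable_fun (Uset k) g ->
  (forall u, Uset k u -> `|g u| <= B) -> mu.-integrable (Uset k) (EFin \o g).
Proof.
move=> hU hg hB; apply: measurable_bounded_integrable => //.
  by apply: (le_lt_trans (probability_le1 mu hU)); rewrite ltry.
exists B; split; first by rewrite num_real.
move=> N hN u Uu /=; apply: (le_trans (hB u Uu)); exact: ltW.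
Qed.

Lemma d0_ge0 (R : realType) k (E : zmodType) (smul : quat R -> E -> E) d
    (mu : probability (quat R) R) a b :
  is_metric d -> 0 <= d0_of k smul d mu a b.
Proof.
move=> hm; change (0 <= Rintegral mu (Uset k) (fun u => d (smul u a) (smul u b))).
by apply: Rintegral_ge0 => u _; exact: d_ge0.
Qed.

Lemma d0_sub (R : realType) k (E : zmodType) (smul : quat R -> E -> E) d C0 C1 C2 C3
    (mu : probability (quat R) R) p q :
  K_vector_space k smul -> is_metric d -> translation_invariant d C0 ->
  lipschitz_multiplicative k smul d C1 C2 C3 -> right_invariant_haar k mu ->
  measurable (@Uset R k) ->
  (forall a b, measurable_fun (Uset k) (fun u => d (smul u a) (smul u b))) ->
  d0_of k smul d mu (p + q) 0 <= d0_of k smul d mu p 0 + d0_of k smul d mu q 0 + C0.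
Proof.
move=> hV hm hT hL hmu hU hf.
have [mU _] := hmu.
have fmU : fine (mu (Uset k)) = 1 by rewrite mU.
have [hA _] := hV.
have [_ [_ ht]] := hm.
have iab a b := fU_integrable hm hL hmu hU (hf a b).
rewrite /d0_of.
change (Rintegral mu (Uset k) (fun u => d (smul u (p + q)) (smul u 0)) <=
  Rintegral mu (Uset k) (fun u => d (smul u p) (smul u 0)) +
  Rintegral mu (Uset k) (fun u => d (smul u q) (smul u 0)) + C0).
rewrite -[C0]mulr1 -fmU -Rintegral_cst // -addrA -RintegralD //; last first.
  exact: finite_measure_integrable_cst.
rewrite -RintegralD //; last first.
  apply: (@bint _ _ _ _ (C1 * d q 0 + C2 + C3 + `|C0|)) => //.
    by apply: measurable_funD => //; exact: measurable_cst.
  move=> u Uu; rewrite (le_trans (ler_normD _ _)) // lerD2r ger0_norm ?d_ge0 //.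
  by have /andP[_ ->] := fU_bounds q 0 hL Uu.
apply: le_Rintegral => //.
- apply: (@bint _ _ _ _ (C1 * d p 0 + C2 + C3 + (C1 * d q 0 + C2 + C3 + `|C0|))) => //.
    by apply: measurable_funD => //; apply: measurable_funD => //; exact: measurable_cst.
  move=> u Uu; rewrite (le_trans (ler_normD _ _)) // lerD //.
    by rewrite ger0_norm ?d_ge0 //; have /andP[_ ->] := fU_bounds p 0 hL Uu.
  rewrite (le_trans (ler_normD _ _)) // lerD2r ger0_norm ?d_ge0 //.
  by have /andP[_ ->] := fU_bounds q 0 hL Uu.
- move=> u Uu; have Ku := UsetK Uu; rewrite /= !(smul0 hV Ku) hA //.
  have e1 := ht (smul u p + smul u q) (0 + smul u q) 0; rewrite add0r in e1.
  have e2 := hT (smul u p) 0 (smul u q); rewrite add0r in e2.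
  lra.
Qed.

Lemma E0_E1 (R : realType) k (E : zmodType) (smul : quat R -> E -> E) d C0 C1 C2 C3
    (mu : probability (quat R) R) :
  K_vector_space k smul -> is_metric d -> translation_invariant d C0 ->
  lipschitz_multiplicative k smul d C1 C2 C3 -> right_invariant_haar k mu ->
  measurable (@Uset R k) ->
  (forall a b, measurable_fun (Uset k) (fun u => d (smul u a) (smul u b))) ->
  E0set k smul d = [set x | asymp_of smul (d0_of k smul d mu) x 0 = 0].
Proof.
move=> hV hm hT hL hmu hU hf.
have [C11 C20 C30 _] := hL.
have C1p : 0 < C1 by lra.
apply/seteqP; split => x /= hx.
- rewrite (asympE _ _ hV); apply: cvg_lim => //.
  apply: (@cvg0_of_bounded _ _ (C1 * C3 + C2 + C3)) => n.
  rewrite /aseq d0_ge0 //=.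
  have /andP[_ h] := d0_le hm hL hmu hU (hf (smul (qreal n%:R) x) 0).
  apply: (le_trans h); rewrite lerD2r lerD2r ler_wpM2l //; first lra.
  exact: (E0_bound hV hm hT hL hx (KsetR k _)).
- rewrite (asympE _ _ hV) in hx.
  have hc : cvgn (fun n => aseq smul (d0_of k smul d mu) x n / n%:R).
    apply: (@fekete _ _ C0).
    + by move=> n; exact: d0_ge0.
    + exact: C0_ge0 hm hT.
    + move=> n m; rewrite /aseq (smulnD _ _ _ hV).
      exact: (d0_sub _ _ hV hm hT hL hmu hU hf).
  have h0 : (fun n => aseq smul (d0_of k smul d mu) x n / n%:R) @ \oo --> 0.
    by rewrite -hx; exact: hc.
  apply/(E0P x hV hm hT hL); exists C3 => l Kl.
  apply: (bound_of_cvg0 hV hm hL) => //.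
  apply: (@squeeze_cvgr _ _ _ _ (fun=> 0)
    (fun n => C1 * (aseq smul (d0_of k smul d mu) x n / n%:R) + C1 * (C2 + C3) * n%:R^-1)).
  + near=> n; have n0 : (0 < n)%N by near: n; exact: nbhs_infty_gt.
    have t0 : 0 < n%:R^-1 :> R by rewrite invr_gt0 ltr0n.
    rewrite divr_ge0 ?ler0n ?d_ge0 //=.
    have /andP[h _] := d0_le hm hL hmu hU (hf (smul (qreal n%:R) x) 0).
    rewrite /aseq.
    set D := d _ _ in h *; set D0 := d0_of _ _ _ _ _ _ in h *.
    set t := n%:R^-1 in t0 *.
    have hD : D <= C1 * (D0 + C2 + C3).
      have : C1^-1 * D <= D0 + C2 + C3 by lra.
      by rewrite ler_pdivrMl.
    have := ler_wpM2r (ltW t0) hD; nra.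
  + exact: cvg_cst.
  + have := cvgD (cvgM (cvg_cst C1) h0) (cvgM (cvg_cst (C1 * (C2 + C3))) (@inv_cvg0 R)).
    by rewrite !mulr0 addr0 => H; apply: H.
Unshelve. all: by end_near.
Qed.

Lemma E0_maximal0 (R : realType) k (E : zmodType) (smul : quat R -> E -> E) d C0 C1 C2 C3
    (mu : probability (quat R) R) :
  K_vector_space k smul -> is_metric d -> translation_invariant d C0 ->
  lipschitz_multiplicative k smul d C1 C2 C3 -> right_invariant_haar k mu ->
  measurable (@Uset R k) ->
  (forall a b, measurable_fun (Uset k) (fun u => d (smul u a) (smul u b))) ->
  maximal_bounded_subspace k smul (d0_of k smul d mu) (E0set k smul d).
Proof.
move=> hV hm hT hL hmu hU hf.
have [C11 C20 C30 _] := hL.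
have [hS [M hM] hmax] := E0_maximal hV hm hT hL.
split => //.
- exists (C1 * M + C2 + C3) => x y hx hy.
  have /andP[_ h] := d0_le hm hL hmu hU (hf x y).
  apply: (le_trans h); rewrite lerD2r lerD2r ler_wpM2l //; [lra | exact: hM].
- move=> G hG [N hN]; apply: hmax => //.
  exists (C1 * (N + C2 + C3)) => x y Gx Gy.
  have /andP[h _] := d0_le hm hL hmu hU (hf x y).
  have := hN x y Gx Gy.
  have : C1^-1 * d x y <= d0_of k smul d mu x y + C2 + C3 by lra.
  rewrite ler_pdivrMl; last lra.
  move=> h1 h2; apply: (le_trans h1); rewrite ler_wpM2l //; lra.
Qed.

Lemma mqa (R : realType) : measurable_fun setT (@qa R).
Proof.
by apply: measurableT_comp; [exact: measurable_fst|];
   apply: measurableT_comp; exact: measurable_fst.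
Qed.
Lemma mqb (R : realType) : measurable_fun setT (@qb R).
Proof.
by apply: measurableT_comp; [exact: measurable_snd|];
   apply: measurableT_comp; exact: measurable_fst.
Qed.
Lemma mqc (R : realType) : measurable_fun setT (@qc R).
Proof. by apply: measurableT_comp; [exact: measurable_snd|exact: measurable_fst]. Qed.
Lemma mqd (R : realType) : measurable_fun setT (@qd R).
Proof. exact: measurable_snd. Qed.

Definition qsq (R : realType) (q : quat R) := qa q ^+ 2 + qb q ^+ 2 + qc q ^+ 2 + qd q ^+ 2.

Lemma mqsq (R : realType) : measurable_fun setT (@qsq R).
Proof.
rewrite /qsq; apply: measurable_funD; [apply: measurable_funD; [apply: measurable_funD|]|];
  apply: measurable_funX; [exact: mqa|exact: mqb|exact: mqc|exact: mqd].
Qed.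

Lemma qnorm1 (R : realType) (q : quat R) : (qnorm q = 1) <-> (qsq q = 1).
Proof.
have s0 : 0 <= qsq q by rewrite /qsq !addr_ge0 // sqr_ge0.
rewrite /qnorm -/(qsq q); split => [h|->]; last exact: sqrtr1.
by rewrite -(sqr_sqrtr s0) h expr1n.
Qed.

Lemma mpre (R : realType) (f : quat R -> R) (A : set R) :
  measurable_fun setT f -> measurable A -> measurable (f @^-1` A).
Proof. by move=> mf mA; rewrite -[_ @^-1` _]setTI; exact: mf. Qed.

Lemma Uset_meas (R : realType) k : measurable (@Uset R k).
Proof.
have -> : @Uset R k = Kset k `&` (@qsq R @^-1` [set 1]).
  by apply/seteqP; split => q [Kq h]; split => //; apply/qnorm1.
apply: measurableI; last exact: mpre (@mqsq R) (measurable_set1 _).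
case: k => /=.
- have -> : [set q : quat R | qb q = 0 /\ qc q = 0 /\ qd q = 0] =
    (@qb R @^-1` [set 0]) `&` ((@qc R @^-1` [set 0]) `&` (@qd R @^-1` [set 0])).
    by apply/seteqP; split => q.
  apply: measurableI; [|apply: measurableI];
    apply: mpre; (exact: mqb || exact: mqc || exact: mqd || exact: measurable_set1).
- have -> : [set q : quat R | qc q = 0 /\ qd q = 0] =
    (@qc R @^-1` [set 0]) `&` (@qd R @^-1` [set 0]).
    by apply/seteqP; split => q.
  apply: measurableI; apply: mpre; (exact: mqc || exact: mqd || exact: measurable_set1).
- exact: measurableT.
Qed.

Definition rnd (R : realType) (n : nat) (x : R) : R :=
  (Num.floor (x * n.+1%:R))%:~R / n.+1%:R.

Lemma rnd_close (R : realType) n (x : R) : `|x - rnd n x| < n.+1%:R^-1.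
Proof.
rewrite /rnd; have N0 : 0 < n.+1%:R :> R by rewrite ltr0n.
have /andP[h1 h2] := Num.Theory.floor_itv (x * n.+1%:R).
rewrite intrD in h2.
set f := (Num.floor _)%:~R in h1 h2 *.
have -> : x - f / n.+1%:R = (x * n.+1%:R - f) / n.+1%:R by rewrite mulrBl mulfK ?gt_eqF.
have i0 : 0 <= n.+1%:R^-1 :> R by rewrite invr_ge0 ltW.
have d0 : 0 <= x * n.+1%:R - f by lra.
rewrite normrM (ger0_norm i0) (ger0_norm d0).
rewrite -[X in _ < X]mul1r ltr_pM2r ?invr_gt0 //; lra.
Qed.

Definition rdq (R : realType) n (q : quat R) : quat R :=
  mkq (rnd n (qa q)) (rnd n (qb q)) (rnd n (qc q)) (rnd n (qd q)).

Lemma rdq_close (R : realType) n (q : quat R) r :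
  0 < r -> 2 / r <= n%:R -> qnorm (qsub q (rdq n q)) < r.
Proof.
move=> r0 hn.
have N0 : 0 < n.+1%:R :> R by rewrite ltr0n.
set t := n.+1%:R^-1 : R.
have t0 : 0 < t by rewrite invr_gt0.
have ht : t * 2 < r.
  have e1 : 2 < n.+1%:R * r.
    have : 2 / r * r < n.+1%:R * r by rewrite ltr_pM2r // (le_lt_trans hn) // ltr_nat.
    by rewrite divfK ?gt_eqF.
  have : t * 2 * n.+1%:R < r * n.+1%:R.
    by rewrite mulrAC /t mulVf ?gt_eqF // mul1r mulrC.
  by rewrite ltr_pM2r.
have sq x : (x - rnd n x) ^+ 2 < t ^+ 2.
  by rewrite -real_normK ?num_real // ltr_pXn2r ?nnegrE ?normr_ge0 ?ltW // rnd_close.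
rewrite /qnorm /qsub /rdq /mkq /qa /qb /qc /qd /=.
rewrite -(@ger0_norm _ r) ?ltW // -[X in _ < X]sqrtr_sqr ltr_sqrt; last first.
  by rewrite exprn_gt0 // normr_gt0 gt_eqF.
have := sq q.1.1.1; have := sq q.1.1.2; have := sq q.1.2; have := sq q.2.
have : (t * 2) * (t * 2) < r * r by nra.
rewrite !expr2; nra.
Qed.

Lemma mfloor_set (R : realType) (m : int) : measurable [set x : R | Num.floor x = m].
Proof.
have -> : [set x : R | Num.floor x = m] = [set` `[m%:~R, (m + 1)%:~R[%R].
  apply/seteqP; split => x /=; rewrite in_itv /= -Num.Theory.floor_eq.
  - by move=> ->.
  - by move/eqP.
exact: measurable_itv.
Qed.

Lemma mcoordN (R : realType) (c : quat R -> R) (N : R) (m : int) :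
  measurable_fun setT c -> measurable [set q | Num.floor (c q * N) = m].
Proof.
move=> mc; apply: (@mpre _ (fun q => c q * N) [set x | Num.floor x = m]).
  by apply: measurable_funM => //; exact: measurable_cst.
exact: mfloor_set.
Qed.

Lemma meas_step (R : realType) (g : quat R -> R) n :
  measurable_fun setT (fun q => g (rdq n q)).
Proof.
move=> _ Y mY; rewrite setTI.
pose N : R := n.+1%:R.
pose box (z : int * int * int * int) := [set q : quat R |
  Num.floor (qa q * N) = z.1.1.1 /\ Num.floor (qb q * N) = z.1.1.2 /\
  Num.floor (qc q * N) = z.1.2 /\ Num.floor (qd q * N) = z.2].
pose grid (z : int * int * int * int) : quat R :=
  mkq (z.1.1.1%:~R / N) (z.1.1.2%:~R / N) (z.1.2%:~R / N) (z.2%:~R / N).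
have -> : (fun q => g (rdq n q)) @^-1` Y =
    \bigcup_(z : int * int * int * int) [set q | box z q /\ Y (g (grid z))].
  apply/seteqP; split => q /=.
  - move=> Yq; exists (Num.floor (qa q * N), Num.floor (qb q * N),
                      Num.floor (qc q * N), Num.floor (qd q * N)) => //.
  - by move=> [z _ [[e1 [e2 [e3 e4]]] Yz]]; rewrite /rdq /rnd -/N e1 e2 e3 e4.
apply: countable_bigcupT_measurable; first exact: countableP.
move=> z; case: (pselect (Y (g (grid z)))) => hz.
- have -> : [set q | box z q /\ Y (g (grid z))] = box z.
    by apply/seteqP; split => q; [case | ].
  rewrite /box.
  have -> : [set q : quat R |
    Num.floor (qa q * N) = z.1.1.1 /\ Num.floor (qb q * N) = z.1.1.2 /\
    Num.floor (qc q * N) = z.1.2 /\ Num.floor (qd q * N) = z.2] =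
    [set q | Num.floor (qa q * N) = z.1.1.1] `&` ([set q | Num.floor (qb q * N) = z.1.1.2]
    `&` ([set q | Num.floor (qc q * N) = z.1.2] `&` [set q | Num.floor (qd q * N) = z.2])).
    by apply/seteqP; split => q.
  apply: measurableI; [|apply: measurableI; [|apply: measurableI]]; apply: mcoordN;
    (exact: mqa || exact: mqb || exact: mqc || exact: mqd).
- have -> : [set q | box z q /\ Y (g (grid z))] = set0.
    by apply/seteqP; split => q // [].
  exact: measurable0.
Qed.

Lemma cont_meas (R : realType) (g : quat R -> R) :
  (forall q e, 0 < e -> exists2 r, 0 < r &
     forall q', qnorm (qsub q q') < r -> `|g q - g q'| < e) ->
  measurable_fun setT g.
Proof.
move=> hg.
apply: (@measurable_fun_cvg _ _ _ _ (fun n q => g (rdq n q))).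
- move=> n; exact: meas_step.
- move=> q _; apply/cvgrPdist_lt => e e0.
  have [r r0 hr] := hg q e e0.
  near=> n; apply: hr; apply: rdq_close => //; near: n; exact: nbhs_infty_ger.
Unshelve. all: by end_near.
Qed.

Definition qproj (R : realType) k (q : quat R) : quat R :=
  match k with
  | KR => mkq (qa q) 0 0 0
  | KC => mkq (qa q) (qb q) 0 0
  | KH => q
  end.

Lemma qproj_K (R : realType) k (q : quat R) : Kset k (qproj k q).
Proof. by case: k. Qed.

Lemma qproj_id (R : realType) k (q : quat R) : Kset k q -> qproj k q = q.
Proof.
case: q => [[[x y] z] w]; case: k => //=; rewrite /mkq /qa /qb /qc /qd /=.
- by move=> [-> [-> ->]].
- by move=> [-> ->].
Qed.

Lemma qproj_le (R : realType) k (p q : quat R) :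
  qnorm (qsub (qproj k p) (qproj k q)) <= qnorm (qsub p q).
Proof.
case: p => [[[x y] z] w]; case: q => [[[x' y'] z'] w'].
case: k; rewrite /= /qnorm /qsub /mkq /qa /qb /qc /qd /=; apply: ler_wsqrtr;
  rewrite ?subrr ?expr0n /= ?addr0.
- have := sqr_ge0 (y - y'); have := sqr_ge0 (z - z'); have := sqr_ge0 (w - w'); lra.
- have := sqr_ge0 (z - z'); have := sqr_ge0 (w - w'); lra.
- by [].
Qed.

Lemma f_meas (R : realType) k (E : zmodType) (smul : quat R -> E -> E) d :
  K_vector_space k smul -> is_metric d -> is_tvs k smul d ->
  forall a b, measurable_fun (Uset k) (fun u => d (smul u a) (smul u b)).
Proof.
move=> hV hm [_ htv] a b.
have [_ [hs ht]] := hm.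
pose g q := d (smul (qproj k q) a) (smul (qproj k q) b).
have mg : measurable_fun setT g.
  apply: cont_meas => q e e0.
  have e20 : 0 < e / 2 by rewrite divr_gt0.
  have [r1 r10 h1] := htv (qproj k q) a (e / 2) (qproj_K k q) e20.
  have [r2 r20 h2] := htv (qproj k q) b (e / 2) (qproj_K k q) e20.
  exists (Order.min r1 r2); first by rewrite lt_min r10 r20.
  move=> q' hq'.
  have hl := le_lt_trans (qproj_le k q q') hq'.
  rewrite lt_min in hl; have /andP[hl1 hl2] := hl.
  have da := h1 (qproj k q') a (qproj_K k q') hl1; rewrite dxx // in da.
  have db := h2 (qproj k q') b (qproj_K k q') hl2; rewrite dxx // in db.
  have := da r10; have := db r20.
  rewrite /g; set A := smul (qproj k q) a; set B := smul (qproj k q) b.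
  set A' := smul (qproj k q') a; set B' := smul (qproj k q') b.
  move=> {}db {}da.
  have t1 := ht A A' B; have t2 := ht A' B' B; have t3 := ht A' A B'.
  have t4 := ht A B B'; rewrite (hs B' B) in t2.
  rewrite (hs A' A) in t3.
  rewrite ltr_norml; apply/andP; split; lra.
have hU := @Uset_meas R k.
apply: (eq_measurable_fun g).
  by move=> u; rewrite inE => -[Ku _]; rewrite /g qproj_id.
exact: measurable_funS mg.
Qed.
Unset Implicit Arguments.

Theorem proposition4 (R : realType) (k : Kkind) (E : zmodType)
  (smul : quat R -> E -> E) (d : E -> E -> R) (C0 C1 C2 C3 : R)
  (mu : probability (quat R) R) :
  K_vector_space k smul ->
  is_metric d ->
  is_tvs k smul d ->
  translation_invariant d C0 ->
  lipschitz_multiplicative k smul d C1 C2 C3 ->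
  right_invariant_haar k mu ->
  let d0 := d0_of k smul d mu in
  let delta := asymp_of smul d in
  let delta0 := asymp_of smul d0 in
  let E0 := [set x | forall u, Uset k u -> delta (smul u x) 0 = 0] in
  let E1 := [set x | delta0 x 0 = 0] in
  E0 = E1 /\
  maximal_bounded_subspace k smul d0 E0 /\
  maximal_bounded_subspace k smul d E0.
Proof.
move=> hV hm htv hT hL hmu d0 delta delta0 E0 E1.
have hU := @Uset_meas R k.
have hf := f_meas hV hm htv.
change (E0set k smul d = [set x | asymp_of smul (d0_of k smul d mu) x 0 = 0] /\
  maximal_bounded_subspace k smul (d0_of k smul d mu) (E0set k smul d) /\
  maximal_bounded_subspace k smul d (E0set k smul d)).
split; first exact: (E0_E1 hV hm hT hL hmu hU hf).
split; first exact: (E0_maximal0 hV hm hT hL hmu hU hf).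
exact: (E0_maximal hV hm hT hL).
Qed.
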